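(* Let $f\in\mathcal{B}^\Sigma_{d,n}$, $b\in\mathcal{B}^\Sigma_{d,m}$ and $a\in\mathcal{B}^\Sigma_{e,n+m}$, and write $\Delta(a)=\sum a^{(1)}\otimes a^{(2)}$. Then $a*(b\cdot f)=\sum (a^{(1)}*b)\cdot(a^{(2)}*f)$, i.e. $a*(b\cdot f)$ is the image of $\Delta(a)*(b\otimes f)\in\mathcal{B}^\Sigma\otimes\mathcal{B}^\Sigma$ under the multiplication map $u\otimes v\mapsto u\cdot v$.
   Context: Let $\mathbf{k}$ be a field of characteristic $0$ and $B=\bigoplus_{d\ge0}B_d$ a commutative graded $\mathbf{k}$-algebra with $B_0=\mathbf{k}$, generated by $B_1$, $\dim B_1<\infty$. $\mathcal{B}^\Sigma_{d,n}=(B_d^{\otimes n})^{\Sigma_n}$ ($\Sigma_n$ permuting factors), $\mathcal{B}^\Sigma=\bigoplus_{n,d}\mathcal{B}^\Sigma_{d,n}$. For $f\in\mathcal{B}^\Sigma_{d,n}$, $g\in\mathcal{B}^\Sigma_{d,m}$, $f\cdot g=\sum_\sigma f\cdot_\sigma g$ where $\sigma$ ranges over subsets $\{i_1<\cdots<i_n\}\subseteq[n+m]$ and $f\cdot_\sigma g$ places the factors of $f$ in positions $i_1,\dots,i_n$ and those of $g$ in the remaining positions in order; $\cdot$ is zero between different $d$. $*:\mathcal{B}^\Sigma_{d,n}\otimes\mathcal{B}^\Sigma_{e,n}\to\mathcal{B}^\Sigma_{d+e,n}$ is factorwise multiplication in $B$, zero for different $n$. $\Delta:\mathcal{B}^\Sigma\to\mathcal{B}^\Sigma\otimes\mathcal{B}^\Sigma$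 is the unique $\cdot$-algebra homomorphism with $\Delta(w)=1\otimes w+w\otimes1$ for $w\in B_d=\mathcal{B}^\Sigma_{d,1}$ (each $\bigoplus_n\mathcal{B}^\Sigma_{d,n}$ being a free divided power algebra on $B_d$). $*$ is extended componentwise to $\mathcal{B}^\Sigma\otimes\mathcal{B}^\Sigma$: $(a'\otimes a'')*(b\otimes f)=(a'*b)\otimes(a''*f)$. *)

(* Defs.v *)
From mathcomp Require Import all_boot all_order all_algebra fingroup perm.
Set Implicit Arguments.
Unset Strict Implicit.
Unset Printing Implicit Defensive.
Import GRing.Theory.
Local Open Scope ring_scope.

(* B is a commutative k-algebra; for each degree d, [bas d : 'I_(r d) -> B]  *)
(* is a basis of the homogeneous component B_d (so B_d is finite            *)
(* dimensional, dim B_d = r d), and [c d d' i j l] are the structure         *)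
(* constants: @bas d i * @bas d' j = \sum_l c d d' i j l *: bas (d+d') l.     *)

Section Graded.
Variables (k : fieldType) (B : comAlgType k) (r : nat -> nat)
          (bas : forall d : nat, 'I_(r d) -> B).

Inductive gen_by_B1 : B -> Prop :=
  | gen_one : gen_by_B1 1
  | gen_B1 (i : 'I_(r 1%N)) : gen_by_B1 (@bas 1%N i)
  | gen_add x y : gen_by_B1 x -> gen_by_B1 y -> gen_by_B1 (x + y)
  | gen_scale (a : k) x : gen_by_B1 x -> gen_by_B1 (a *: x)
  | gen_mul x y : gen_by_B1 x -> gen_by_B1 y -> gen_by_B1 (x * y).

Definition graded_algebra_gen_B1
  (c : forall d d', 'I_(r d) -> 'I_(r d') -> 'I_(r (d + d')%N) -> k) : Prop :=
  (forall (D : nat) (l : forall d : nat, 'I_(r d) -> k),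
      \sum_(d < D) \sum_(i < r d) l d i *: @bas d i = 0 ->
      forall (d : 'I_D) (i : 'I_(r d)), l d i = 0) /\
  (forall x : B, exists (D : nat) (l : forall d : nat, 'I_(r d) -> k),
      x = \sum_(d < D) \sum_(i < r d) l d i *: @bas d i) /\
  (forall d d' (i : 'I_(r d)) (j : 'I_(r d')),
      @bas d i * @bas d' j = \sum_(l < r (d + d')%N) c d d' i j l *: @bas (d + d')%N l) /\
  r 0 = 1%N /\
  (exists l : 'I_(r 0) -> k, 1 = \sum_(i < r 0) l i *: @bas 0 i) /\
  (forall x : B, gen_by_B1 x).

End Graded.

(* Tensor powers.  An element of B_d^{(x)n} is given by its coordinates in   *)
(* the basis bas d (i_1) (x) ... (x) bas d (i_n): tens r d n.                *)
(* An element of B_d^{(x)p} (x) B_d^{(x)q} is given by its coordinates:       *)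
(* tens2 r d p q.                                                            *)

Notation tens k r d n := {ffun {ffun 'I_n -> 'I_(r d)} -> k}.
Notation tens2 k r d p q :=
  {ffun {ffun 'I_p -> 'I_(r d)} * {ffun 'I_q -> 'I_(r d)} -> k}.

Section Tensors.
Variables (k : fieldType) (r : nat -> nat).


Definition sym d n (x : tens k r d n) : Prop :=
  forall (s : 'S_n) (I : {ffun 'I_n -> 'I_(r d)}), x [ffun j => I (s j)] = x I.

(* unit of (+)_n B^Sigma_{d,n}: 1 in B_d^{(x)0} = k *)
Definition tens_one d : tens k r d 0 := [ffun _ => 1].

Definition tdelta d n (I : {ffun 'I_n -> 'I_(r d)}) : tens k r d n :=
  [ffun J : {ffun 'I_n -> 'I_(r d)} => (J == I)%:R].

Definition shuffle n m N (p : {ffun 'I_n -> 'I_N}) (q : {ffun 'I_m -> 'I_N}) :=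
  [&& [forall i : 'I_n, forall j : 'I_n, (i < j)%N ==> (p i < p j)%N],
      [forall i : 'I_m, forall j : 'I_m, (i < j)%N ==> (q i < q j)%N] &
      [forall x : 'I_N, (x \in codom p) != (x \in codom q)]].

(* sum over shuffles sigma of f ._sigma g, with output length N
   (zero unless N = n + m) *)
Definition shufprod d n m N (f : tens k r d n) (g : tens k r d m) : tens k r d N :=
  [ffun I : {ffun 'I_N -> 'I_(r d)} => \sum_(p : {ffun 'I_n -> 'I_N})
              \sum_(q : {ffun 'I_m -> 'I_N} | shuffle p q)
                f [ffun j => I (p j)] * g [ffun j => I (q j)]].

Definition dot d n m (f : tens k r d n) (g : tens k r d m) : tens k r d (n + m) :=
  shufprod (n + m) f g.

(* the product on B^Sigma (x) B^Sigma : (x1 (x) x2)(y1 (x) y2) = x1.y1 (x) x2.y2,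
   on the components (p1,q1), (p2,q2) -> (p,q) *)
Definition dot2 d p1 q1 p2 q2 p q (X : tens2 k r d p1 q1) (Y : tens2 k r d p2 q2)
  : tens2 k r d p q :=
  [ffun IJ : {ffun 'I_p -> 'I_(r d)} * {ffun 'I_q -> 'I_(r d)} => \sum_(s1 : {ffun 'I_p1 -> 'I_p})
              \sum_(s2 : {ffun 'I_p2 -> 'I_p} | shuffle s1 s2)
              \sum_(t1 : {ffun 'I_q1 -> 'I_q})
              \sum_(t2 : {ffun 'I_q2 -> 'I_q} | shuffle t1 t2)
                X ([ffun j => IJ.1 (s1 j)], [ffun j => IJ.2 (t1 j)]) *
                Y ([ffun j => IJ.1 (s2 j)], [ffun j => IJ.2 (t2 j)])].

Variable c : forall d d', 'I_(r d) -> 'I_(r d') -> 'I_(r (d + d')%N) -> k.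

Definition star d d' n (a : tens k r d n) (b : tens k r d' n) : tens k r (d + d')%N n :=
  [ffun L : {ffun 'I_n -> 'I_(r (d + d')%N)} => \sum_(I : {ffun 'I_n -> 'I_(r d)}) \sum_(J : {ffun 'I_n -> 'I_(r d')})
     a I * b J * \prod_(j < n) c (I j) (J j) (L j)].

(* The map  u (x) v |-> (u * b) . (v * f)  applied to an element of
   B_e^{(x)m} (x) B_e^{(x)n}, extended linearly. *)
Definition mu e d m n (b : tens k r d m) (f : tens k r d n) (X : tens2 k r e m n)
  : tens k r (e + d) (m + n) :=
  [ffun L : {ffun 'I_(m + n) -> 'I_(r (e + d))} =>
    \sum_(IJ : {ffun 'I_m -> 'I_(r e)} * {ffun 'I_n -> 'I_(r e)})
      X IJ * dot (star (tdelta IJ.1) b) (star (tdelta IJ.2) f) L].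

(* Delta on (+)_N B^Sigma_{e,N}, given by its components
   Delta N p q : B^Sigma_{e,N} -> B^Sigma_{e,p} (x) B^Sigma_{e,q}:
   a (linear, unital) .-algebra homomorphism with
   Delta(w) = 1 (x) w + w (x) 1 for w in B_e = B^Sigma_{e,1}. *)
Definition is_Delta e (Delta : forall N p q : nat, tens k r e N -> tens2 k r e p q) : Prop :=
  (forall N p q (a : k) (x y : tens k r e N), sym x -> sym y ->
      Delta N p q [ffun I => a * x I + y I] =
      [ffun IJ => a * Delta N p q x IJ + Delta N p q y IJ]) /\
  (forall N1 N2 (x : tens k r e N1) (y : tens k r e N2) p q, sym x -> sym y ->
      Delta (N1 + N2)%N p q (dot x y) =
      \sum_(p1 < p.+1) \sum_(q1 < q.+1)
         dot2 p q (Delta N1 p1 q1 x) (Delta N2 (p - p1)%N (q - q1)%N y)) /\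
  Delta 0 0 0 (tens_one e) = [ffun _ => 1] /\
  (forall p q, (p, q) != (0%N, 0%N) -> Delta 0 p q (tens_one e) = 0) /\
  (forall w : tens k r e 1,
      [/\ Delta 1 0 1 w = [ffun IJ => w IJ.2],
          Delta 1 1 0 w = [ffun IJ => w IJ.1] &
          forall p q, (p, q) != (0%N, 1%N) -> (p, q) != (1%N, 0%N) ->
            Delta 1 p q w = 0]).

End Tensors.

(* Main.v *)
Require Import Defs.
From mathcomp Require Import all_boot all_order all_algebra fingroup perm.
From mathcomp Require Import zify.
From mathcomp Require Import zify.
Set Implicit Arguments. Unset Strict Implicit. Unset Printing Implicit Defensive.
Import GRing.Theory.
Local Open Scope ring_scope.

Definition incr n M (s : {ffun 'I_n -> 'I_M}) :=
  [forall i : 'I_n, forall j : 'I_n, (i < j)%N ==> (s i < s j)%N].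

Lemma shuffleE n m N (s : {ffun 'I_n -> 'I_N}) (t : {ffun 'I_m -> 'I_N}) :
  shuffle s t = [&& incr s, incr t & [forall x : 'I_N, (x \in codom s) != (x \in codom t)]].
Proof. by []. Qed.

Lemma incrP n M (s : {ffun 'I_n -> 'I_M}) :
  incr s -> forall i j : 'I_n, (i < j)%N -> (s i < s j)%N.
Proof. by move=> /forallP H i j lij; move: (H i) => /forallP /(_ j) /implyP; apply. Qed.

Lemma incr_inj n M (s : {ffun 'I_n -> 'I_M}) : incr s -> injective s.
Proof.
move=> Hs i j eij; apply/eqP; case: (ltngtP i j) => [l|l|/val_inj->//].
- by have := incrP Hs l; rewrite eij ltnn.
- by have := incrP Hs l; rewrite eij ltnn.
Qed.

Lemma incr_sorted n M (s : {ffun 'I_n -> 'I_M}) :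
  incr s -> sorted (fun x y : 'I_M => (x < y)%N) (codom s).
Proof.
move=> Hs; rewrite codomE.
apply: (@homo_sorted _ _ s (fun x y : 'I_n => (x < y)%N)); first by move=> x y; apply: incrP.
have := iota_ltn_sorted 0 n; rewrite -val_enum_ord sorted_map.
by [].
Qed.

Lemma shuffle_mem n m N (s : {ffun 'I_n -> 'I_N}) (t : {ffun 'I_m -> 'I_N}) x :
  shuffle s t -> (x \in codom t) = (x \notin codom s).
Proof.
rewrite shuffleE => /and3P[_ _ /forallP /(_ x)].
by case: (x \in codom s); case: (x \in codom t).
Qed.

Lemma shuffle_uniq n m N (s : {ffun 'I_n -> 'I_N}) (t t' : {ffun 'I_m -> 'I_N}) :
  shuffle s t -> shuffle s t' -> t = t'.
Proof.
move=> H H'; have eq : codom t = codom t'.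
  apply: (@irr_sorted_eq _ (fun x y : 'I_N => (x < y)%N)).
  - by move=> x y z /= ; apply: ltn_trans.
  - by move=> x; rewrite /= ltnn.
  - by apply: incr_sorted; case/and3P: H.
  - by apply: incr_sorted; case/and3P: H'.
  - by move=> x; rewrite (shuffle_mem _ H) (shuffle_mem _ H').
apply/ffunP=> j; move: eq; rewrite !codomE => /eq_in_map; apply.
by rewrite mem_enum.
Qed.

Lemma shuffle_perm n m N (s : {ffun 'I_n -> 'I_N}) (t : {ffun 'I_m -> 'I_N}) :
  shuffle s t -> perm_eq (enum 'I_N) (codom s ++ codom t).
Proof.
move=> H; have /and3P[Hs Ht _] := H.
apply: uniq_perm; first exact: enum_uniq.
- rewrite cat_uniq; apply/and3P; split.
  + by rewrite codomE map_inj_uniq ?enum_uniq //; exact: incr_inj.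
  + apply/hasPn => x /=; rewrite (shuffle_mem _ H).
    by [].
  + by rewrite codomE map_inj_uniq ?enum_uniq //; exact: incr_inj.
- move=> x; rewrite mem_enum mem_cat (shuffle_mem _ H).
  by case: (x \in codom s).
Qed.

Lemma codom_comp (T : finType) n N (K : {ffun 'I_N -> T}) (s : {ffun 'I_n -> 'I_N}) :
  codom [ffun j => K (s j)] = map K (codom s).
Proof. rewrite (codomE [ffun j => K (s j)]) (codomE s) -(map_comp K s); apply: eq_map => j /=; by rewrite ffunE. Qed.

Lemma shuffle_codom (T : finType) n m N (s : {ffun 'I_n -> 'I_N}) (t : {ffun 'I_m -> 'I_N})
  (K : {ffun 'I_N -> T}) :
  shuffle s t -> perm_eq (codom K) (codom [ffun j => K (s j)] ++ codom [ffun j => K (t j)]).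
Proof.
move=> H; rewrite !codom_comp -map_cat codomE.
by apply: perm_map; apply: shuffle_perm.
Qed.

Lemma sym_perm (k : fieldType) r d n (x : tens k r d n) (F G : {ffun 'I_n -> 'I_(r d)}) :
  sym x -> perm_eq (codom F) (codom G) -> x F = x G.
Proof.
move=> Hx H.
have eG : codom G = [tuple G i | i < n] :> seq _.
  rewrite -[RHS]map_tnth_enum codomE; apply: eq_map => i; by rewrite tnth_mktuple.
rewrite eG in H; case/tuple_permP: H => p eF.
have FE : forall i, F i = G (p i).
  move=> i; move: eF; rewrite codomE /= => /eq_in_map/(_ i (mem_enum _ i)).
  by rewrite /= tnth_mktuple.
rewrite -(Hx p G); congr (x _); apply/ffunP => i; by rewrite ffunE FE.
Qed.

Definition catf (T : Type) p q (K1 : {ffun 'I_p -> T}) (K2 : {ffun 'I_q -> T}) : {ffun 'I_(p + q) -> T} :=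
  [ffun j => match split j with inl a => K1 a | inr b => K2 b end].

Lemma catf_l (T : Type) p q (K1 : {ffun 'I_p -> T}) (K2 : {ffun 'I_q -> T}) i :
  catf K1 K2 (lshift q i) = K1 i.
Proof. by rewrite ffunE (unsplitK (inl i)). Qed.

Lemma catf_r (T : Type) p q (K1 : {ffun 'I_p -> T}) (K2 : {ffun 'I_q -> T}) i :
  catf K1 K2 (rshift p i) = K2 i.
Proof. by rewrite ffunE (unsplitK (inr i)). Qed.

Lemma shuffle_lr p q : shuffle [ffun j : 'I_p => lshift q j] [ffun j : 'I_q => rshift p j].
Proof.
rewrite shuffleE /incr; apply/and3P; split.
- by apply/forallP => i; apply/forallP => j; rewrite !ffunE; apply/implyP.
- by apply/forallP => i; apply/forallP => j; rewrite !ffunE /= ltn_add2l; apply/implyP.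
- apply/forallP => x; case: (split_ordP x) => y ->.
  + have -> : lshift q y \in codom [ffun j => lshift q j] by apply/codomP; exists y; rewrite ffunE.
    suff -> : (lshift q y \in codom [ffun j => rshift p j]) = false by [].
    apply/negbTE/negP => /codomP [z]; rewrite ffunE => /eqP; by rewrite eq_lrshift.
  + have -> : rshift p y \in codom [ffun j => rshift p j] by apply/codomP; exists y; rewrite ffunE.
    suff -> : (rshift p y \in codom [ffun j => lshift q j]) = false by [].
    apply/negbTE/negP => /codomP [z]; rewrite ffunE => /eqP; by rewrite eq_rlshift.
Qed.

Lemma codom_catf (T : finType) p q (K1 : {ffun 'I_p -> T}) (K2 : {ffun 'I_q -> T}) :
  perm_eq (codom (catf K1 K2)) (codom K1 ++ codom K2).
Proof.
have H := shuffle_codom (catf K1 K2) (shuffle_lr p q).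
have e1 : [ffun j => catf K1 K2 ([ffun j0 => lshift q j0] j)] = K1.
  by apply/ffunP => j; rewrite !ffunE -[lshift q j]/(unsplit (inl j)) unsplitK.
have e2 : [ffun j => catf K1 K2 ([ffun j0 => rshift p j0] j)] = K2.
  by apply/ffunP => j; rewrite !ffunE -[rshift p j]/(unsplit (inr j)) unsplitK.
by rewrite e1 e2 in H.
Qed.

Lemma shuffle_ex0 a a' (e : a' = a) (s1 : {ffun 'I_0 -> 'I_a}) :
  exists t : {ffun 'I_a' -> 'I_a}, shuffle s1 t.
Proof.
subst a'; exists [ffun j => j]; rewrite shuffleE /incr; apply/and3P; split.
- by apply/forallP => [[]].
- by apply/forallP => i; apply/forallP => j; rewrite !ffunE; apply/implyP.
- apply/forallP => x.
  have -> : x \in codom [ffun j : 'I_a => j] by apply/codomP; exists x; rewrite ffunE.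
  suff -> : (x \in codom s1) = false by [].
  by apply/negbTE/negP => /codomP [[]].
Qed.

Lemma shuffle_lift1 b (t1 : {ffun 'I_1 -> 'I_b.+1}) :
  shuffle t1 [ffun j => lift (t1 ord0) j].
Proof.
rewrite shuffleE /incr; apply/and3P; split.
- apply/forallP => i; apply/forallP => j; apply/implyP.
  by rewrite (ord1 i) (ord1 j).
- apply/forallP => i; apply/forallP => j; rewrite !ffunE /= /bump; apply/implyP => lij.
  case: (leqP (t1 ord0) i); case: (leqP (t1 ord0) j) => /= h1 h2; rewrite ?add0n ?add1n //; lia.
- apply/forallP => x.
  have Hc : (x \in codom t1) = (x == t1 ord0).
    apply/codomP/eqP => [[z ->]|->]; [by rewrite (ord1 z) | by exists ord0].
  rewrite Hc; case: (unliftP (t1 ord0) x) => [j ->|->].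
  + rewrite lift_eqF; suff -> : lift (t1 ord0) j \in codom [ffun j => lift (t1 ord0) j] by [].
    apply/codomP; exists j; by rewrite ffunE.
  + rewrite eqxx; suff -> : (t1 ord0 \in codom [ffun j => lift (t1 ord0) j]) = false by [].
    apply/negbTE/negP => /codomP [z]; rewrite ffunE => /eqP; by rewrite eq_liftF.
Qed.

Lemma shuffle_ex1 b M (e : b.+1 = M) (t1 : {ffun 'I_1 -> 'I_M}) :
  exists t : {ffun 'I_b -> 'I_M}, shuffle t1 t.
Proof.
subst M; exists [ffun j => lift (t1 ord0) j]; rewrite shuffleE /incr; apply/and3P; split.
- apply/forallP => i; apply/forallP => j; apply/implyP.
  by rewrite (ord1 i) (ord1 j).
- apply/forallP => i; apply/forallP => j; rewrite !ffunE /= /bump; apply/implyP => lij.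
  case: (leqP (t1 ord0) i); case: (leqP (t1 ord0) j) => /= h1 h2; rewrite ?add0n ?add1n //; lia.
- apply/forallP => x.
  have Hc : (x \in codom t1) = (x == t1 ord0).
    apply/codomP/eqP => [[z ->]|->]; [by rewrite (ord1 z) | by exists ord0].
  rewrite Hc; case: (unliftP (t1 ord0) x) => [j ->|->].
  + rewrite lift_eqF; suff -> : lift (t1 ord0) j \in codom [ffun j => lift (t1 ord0) j] by []; apply/codomP; exists j; by rewrite ffunE.
  + rewrite eqxx; suff -> : (t1 ord0 \in codom [ffun j => lift (t1 ord0) j]) = false by [].
    apply/negbTE/negP => /codomP [z]; rewrite ffunE => /eqP; by rewrite eq_liftF.
Qed.

Lemma sum_shuffle_const (k : fieldType) n m N (s : {ffun 'I_n -> 'I_N}) (v : k) :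
  (exists t : {ffun 'I_m -> 'I_N}, shuffle s t) ->
  \sum_(t : {ffun 'I_m -> 'I_N} | shuffle s t) v = v.
Proof.
case=> t0 H0; rewrite (big_pred1 t0) // => t /=.
by apply/idP/eqP => [Ht|->//]; apply: shuffle_uniq Ht H0.
Qed.

Lemma sum_ffun0_const (k : fieldType) a (v : k) :
  \sum_(s : {ffun 'I_0 -> 'I_a}) v = v.
Proof. by rewrite sumr_const card_ffun !card_ord expn0. Qed.

Lemma sum_ffun1_const (k : fieldType) a (v : k) :
  \sum_(s : {ffun 'I_1 -> 'I_a}) v = v *+ a.
Proof. by rewrite sumr_const card_ffun !card_ord expn1. Qed.

Lemma codom0 (T : eqType) (f : {ffun 'I_0 -> T}) : codom f = [::].
Proof. by rewrite codomE enum_ord0. Qed.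

Lemma codom1 (T : eqType) (f : {ffun 'I_1 -> T}) : codom f = [:: f ord0].
Proof. by rewrite codomE enum_ordSl enum_ord0. Qed.

Definition castf (T : Type) M N (E : M = N) (F : {ffun 'I_M -> T}) : {ffun 'I_N -> T} :=
  [ffun j => F (cast_ord (esym E) j)].

Lemma codom_castf (T : finType) M N (E : M = N) (F : {ffun 'I_M -> T}) :
  perm_eq (codom (castf E F)) (codom F).
Proof.
case: N / E; have -> : castf (erefl M) F = F by apply/ffunP => j; rewrite ffunE cast_ord_id.
exact: perm_refl.
Qed.

Lemma codom_perm (T : finType) N (s : 'S_N) (J : {ffun 'I_N -> T}) :
  perm_eq (codom [ffun j => J (s j)]) (codom J).
Proof.
have -> : codom [ffun j => J (s j)] = map J (map s (enum 'I_N)).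
  by rewrite codomE -(map_comp J s); apply: eq_map => j; rewrite /= ffunE.
rewrite (codomE J); apply: perm_map; apply: uniq_perm.
- by rewrite map_inj_uniq ?enum_uniq //; exact: perm_inj.
- exact: enum_uniq.
- move=> x; rewrite mem_enum; apply/mapP; exists (s^-1 x)%g; by rewrite ?mem_enum ?permKV.
Qed.

Lemma codom_lift (T : finType) N (G : {ffun 'I_N.+1 -> T}) (u : 'I_N.+1) :
  perm_eq (codom G) (G u :: codom [ffun j => G (lift u j)]).
Proof.
have H := shuffle_codom G (shuffle_lift1 [ffun _ : 'I_1 => u]).
rewrite codom1 !ffunE in H.
have -> : [ffun j : 'I_N => G (lift u j)] = [ffun j : 'I_N => G ([ffun j0 : 'I_N => lift ([ffun _ : 'I_1 => u] ord0) j0] j)].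
  by apply/ffunP => j; rewrite !ffunE.
by rewrite ffunE.
Qed.

Lemma sym_lin (k : fieldType) r d n (a : k) (x y : tens k r d n) :
  sym x -> sym y -> sym [ffun I => a * x I + y I].
Proof. by move=> Hx Hy s I; rewrite !ffunE Hx Hy. Qed.

Lemma sym0 (k : fieldType) r d n : sym (0 : tens k r d n).
Proof. by move=> s I; rewrite !ffunE. Qed.

Lemma dot1E (k : fieldType) r d N (w : tens k r d 1) (y : tens k r d N) I :
  dot w y I = \sum_(u : 'I_(1 + N)%N) w [ffun _ => I u] * y [ffun j => I (lift u j)].
Proof.
rewrite /dot /shufprod ffunE.
rewrite (reindex (fun u : 'I_(1 + N)%N => [ffun _ : 'I_1 => u])) /=; last first.
  exists (fun s : {ffun 'I_1 -> 'I_(1 + N)%N} => s ord0) => [s _|u _]; first by rewrite ffunE.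
  by apply/ffunP => i; rewrite ffunE (ord1 i).
apply: eq_bigr => u _.
rewrite (big_pred1 [ffun j => lift ([ffun _ : 'I_1 => u] ord0) j]); last first.
  move=> t /=; apply/idP/eqP => [Ht|->]; last exact: shuffle_lift1.
  exact: shuffle_uniq Ht (shuffle_lift1 _).
congr (_ * _); f_equal; apply/ffunP => i; by rewrite !ffunE.
Qed.

Lemma sym_dot1 (k : fieldType) r d N (w : tens k r d 1) (y : tens k r d N) :
  sym y -> sym (dot w y).
Proof.
move=> Hy s I; rewrite !dot1E [RHS](reindex_inj (@perm_inj _ s)).
apply: eq_bigr => u _; congr (_ * _); first by f_equal; apply/ffunP => i; rewrite !ffunE.
set G := [ffun j => I (s j)].
have H1 := codom_lift G u; have H2 := codom_lift I (s u); have H3 := codom_perm s I.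
have : perm_eq (G u :: codom [ffun j => G (lift u j)]) (I (s u) :: codom [ffun j => I (lift (s u) j)]).
  by apply: (perm_trans _ (perm_trans H3 H2)); rewrite perm_sym.
rewrite /G ffunE perm_cons => H.
have -> : [ffun j => [ffun j0 => I (s j0)] (lift u j)] = [ffun j => G (lift u j)] by [].
apply: sym_perm => //.
Qed.

Lemma Delta0 (k : fieldType) (r : nat -> nat) (e : nat)
  (Delta : forall N p q : nat, tens k r e N -> tens2 k r e p q) :
  is_Delta Delta -> forall N p q, Delta N p q 0 = 0.
Proof.
case=> lin _ N p q.
have := lin N p q 1 0 0 (@sym0 k r e N) (@sym0 k r e N).
have -> : [ffun I => 1 * (0 : tens k r e N) I + (0 : tens k r e N) I] = 0.
  by apply/ffunP => I; rewrite !ffunE mul1r addr0.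
move=> H; apply/ffunP => IJ; have := congr1 (fun f : tens2 k r e p q => f IJ) H; rewrite !ffunE mul1r => h.
by apply: (@addrI _ (Delta N p q 0 IJ)); rewrite addr0 -h.
Qed.

Lemma sym_sum (k : fieldType) r d n (I0 : Type) (l : seq I0) (z : I0 -> tens k r d n) :
  (forall i, sym (z i)) -> sym [ffun I => \sum_(i <- l) z i I].
Proof. by move=> Hz s I; rewrite !ffunE; apply: eq_bigr => i _; rewrite Hz. Qed.

Lemma Delta_sum (k : fieldType) (r : nat -> nat) (e : nat)
  (Delta : forall N p q : nat, tens k r e N -> tens2 k r e p q) :
  is_Delta Delta -> forall N p q (I0 : Type) (l : seq I0) (z : I0 -> tens k r e N),
  (forall i, sym (z i)) ->
  Delta N p q [ffun I => \sum_(i <- l) z i I] = [ffun IJ => \sum_(i <- l) Delta N p q (z i) IJ].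
Proof.
move=> hD N p q I0 l z Hz; elim: l => [|a l IH].
  have -> : [ffun I => \sum_(i <- [::]) z i I] = 0 by apply/ffunP => I; rewrite !ffunE big_nil.
  by rewrite (Delta0 hD); apply/ffunP => IJ; rewrite !ffunE big_nil.
have -> : [ffun I => \sum_(i <- a :: l) z i I] =
          [ffun I => 1 * z a I + [ffun I => \sum_(i <- l) z i I] I].
  by apply/ffunP => I; rewrite !ffunE big_cons mul1r.
case: hD => lin _; rewrite lin ?IH //; last exact: sym_sum.
by apply/ffunP => IJ; rewrite !ffunE big_cons mul1r.
Qed.

Definition Char (k : fieldType) (r : nat -> nat) (e : nat)
  (Delta : forall N p q : nat, tens k r e N -> tens2 k r e p q) N :=
  forall x : tens k r e N, sym x ->
  (forall p q (E : (p + q)%N = N) K1 K2, Delta N p q x (K1, K2) = x (castf E (catf K1 K2))) /\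
  (forall p q, (p + q)%N <> N -> forall KK, Delta N p q x KK = 0).

Lemma Char0 (k : fieldType) (r : nat -> nat) (e : nat)
  (Delta : forall N p q : nat, tens k r e N -> tens2 k r e p q) :
  is_Delta Delta -> Char Delta 0.
Proof.
move=> hD x Hx.
have all0 : forall F G : {ffun 'I_0 -> 'I_(r e)}, F = G by move=> F G; apply/ffunP => [[]].
have F0 : {ffun 'I_0 -> 'I_(r e)}.
  by apply: finfun => -[m Hm]; exfalso; rewrite ltn0 in Hm.
have xE : x = [ffun I => x F0 * (@tens_one k r e) I + (0 : tens k r e 0) I].
  by apply/ffunP => I; rewrite !ffunE mulr1 addr0 (all0 I F0).
case: (hD) => lin [_ [one1 [one0 _]]].
have s1 : sym (@tens_one k r e) by move=> s I; rewrite /tens_one !ffunE.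
have s0 := @sym0 k r e 0.
rewrite xE; split.
- move=> p q E K1 K2.
  have [p0 q0] : p = 0%N /\ q = 0%N by lia.
  subst p q; rewrite lin //.
  by rewrite (Delta0 hD) one1 !ffunE mulr1 addr0.
- move=> p q Hpq KK.
  rewrite lin //.
  rewrite (Delta0 hD) one0 ?ffunE ?mulr0 ?addr0 //.
  by apply/eqP => -[p0 q0]; apply: Hpq; rewrite p0 q0.
Qed.

Lemma sum_delta1 (k : fieldType) (T : finType) (J : {ffun 'I_1 -> T}) (g : T -> k) :
  \sum_(i : T) (J == [ffun _ => i])%:R * g i = g (J ord0).
Proof.
rewrite (bigD1 (J ord0)) //= big1 ?addr0.
  have -> : J == [ffun _ => J ord0] by apply/eqP/ffunP => i; rewrite ffunE (ord1 i).
  by rewrite mul1r.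
move=> i ne; suff -> : (J == [ffun _ => i]) = false by rewrite mul0r.
apply/negbTE/eqP => h; move: ne; by rewrite h ffunE eqxx.
Qed.

Definition yy (k : fieldType) (r : nat -> nat) e N (x : tens k r e (1 + N)%N) (i : 'I_(r e))
  : tens k r e N := [ffun J => x (catf [ffun _ : 'I_1 => i] J)].

Lemma sym_yy (k : fieldType) (r : nat -> nat) e N (x : tens k r e (1 + N)%N) i :
  sym x -> sym (yy x i).
Proof.
move=> Hx s J; rewrite !ffunE; apply: sym_perm => //.
rewrite (permPl (codom_catf _ _)) (permPr (codom_catf _ _)) perm_cat2l.
by apply: codom_perm.
Qed.

Lemma dot2_0l (k : fieldType) r d p1 q1 p2 q2 p q (X : tens2 k r d p1 q1) (Y : tens2 k r d p2 q2) KK :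
  (forall KK, X KK = 0) -> dot2 p q X Y KK = 0.
Proof.
move=> H; rewrite ffunE; do 4! (apply: big1 => ? _); by rewrite H mul0r.
Qed.

Lemma dot2_0r (k : fieldType) r d p1 q1 p2 q2 p q (X : tens2 k r d p1 q1) (Y : tens2 k r d p2 q2) KK :
  (forall KK, Y KK = 0) -> dot2 p q X Y KK = 0.
Proof.
move=> H; rewrite ffunE; do 4! (apply: big1 => ? _); by rewrite H mulr0.
Qed.

Lemma sum2 (k : fieldType) (G : nat -> nat -> k) p q :
  (forall p1 q1, (p1, q1) != (0%N, 1%N) -> (p1, q1) != (1%N, 0%N) -> G p1 q1 = 0) ->
  \sum_(p1 < p.+1) \sum_(q1 < q.+1) G p1 q1 =
  (if (0 < q)%N then G 0%N 1%N else 0) + (if (0 < p)%N then G 1%N 0%N else 0).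
Proof.
move=> HG; rewrite big_ord_recl big_ord_recl HG // add0r; congr (_ + _).
  case: q => [|q]; first by rewrite big_ord0.
  rewrite big_ord_recl big1 ?addr0 // => i _; apply: HG => //.
case: p => [|p]; first by rewrite big_ord0.
rewrite big_ord_recl [X in _ + X]big1 ?addr0; last first.
  move=> i _; apply: big1 => j _; by apply: HG.
rewrite big_ord_recl [X in _ + X]big1 ?addr0 //.
move=> j _; by apply: HG.
Qed.

Lemma term01 (k : fieldType) (r : nat -> nat) (e : nat)
  (Delta : forall N p q : nat, tens k r e N -> tens2 k r e p q) N
  (hD : is_Delta Delta) (IH : Char Delta N) (x : tens k r e (1 + N)%N) (Hx : sym x)
  p q (E : (p + q)%N = (1 + N)%N) (q0 : (0 < q)%N) K1 K2 :
  \sum_(i : 'I_(r e)) dot2 p q (Delta 1%N 0%N 1%N (tdelta k [ffun _ : 'I_1 => i]))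
        (Delta N (p - 0)%N (q - 1)%N (yy x i)) (K1, K2) = x (castf E (catf K1 K2)) *+ q.
Proof.
set v := x (castf E (catf K1 K2)).
have E' : ((p - 0) + (q - 1))%N = N by lia.
case: (hD) => _ [_ [_ [_ hw]]].
transitivity (\sum_(s1 : {ffun 'I_0 -> 'I_p}) \sum_(s2 : {ffun 'I_(p - 0)%N -> 'I_p} | shuffle s1 s2)
   \sum_(t1 : {ffun 'I_1 -> 'I_q}) \sum_(t2 : {ffun 'I_(q - 1)%N -> 'I_q} | shuffle t1 t2) v); last first.
  rewrite (eq_bigr (fun=> v *+ q)) ?sum_ffun0_const // => s1 _.
  rewrite (eq_bigr (fun=> v *+ q)) ?sum_shuffle_const //; last first.
    move=> s2 _; rewrite (eq_bigr (fun=> v)) ?sum_ffun1_const // => t1 _.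
    apply: sum_shuffle_const; apply: shuffle_ex1; lia.
  by apply: shuffle_ex0; rewrite subn0.
under eq_bigr do rewrite ffunE.
rewrite exchange_big; apply: eq_bigr => s1 _.
rewrite exchange_big; apply: eq_bigr => s2 Hs.
rewrite exchange_big; apply: eq_bigr => t1 _.
rewrite exchange_big; apply: eq_bigr => t2 Ht.
rewrite /=.
under eq_bigr => i _.
  case: (hw (tdelta k [ffun _ : 'I_1 => i])) => -> _ _.
  rewrite (proj1 (IH _ (sym_yy i Hx)) _ _ E') /yy !ffunE /=.
  over.
rewrite /= sum_delta1 ffunE /v; apply: sym_perm => //.
rewrite (permPl (codom_catf _ _)) (permPr (codom_castf _ _)) (permPr (codom_catf _ _)).
rewrite (permPr (perm_cat (shuffle_codom K1 Hs) (shuffle_codom K2 Ht))).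
rewrite (permPl (perm_cat (perm_refl _) (codom_castf _ _))) (permPl (perm_cat (perm_refl _) (codom_catf _ _))).
rewrite codom0 !codom1 !ffunE /=.
by rewrite -cat1s perm_catCA.
Qed.

Lemma term10 (k : fieldType) (r : nat -> nat) (e : nat)
  (Delta : forall N p q : nat, tens k r e N -> tens2 k r e p q) N
  (hD : is_Delta Delta) (IH : Char Delta N) (x : tens k r e (1 + N)%N) (Hx : sym x)
  p q (E : (p + q)%N = (1 + N)%N) (p0 : (0 < p)%N) K1 K2 :
  \sum_(i : 'I_(r e)) dot2 p q (Delta 1%N 1%N 0%N (tdelta k [ffun _ : 'I_1 => i]))
        (Delta N (p - 1)%N (q - 0)%N (yy x i)) (K1, K2) = x (castf E (catf K1 K2)) *+ p.
Proof.
set v := x (castf E (catf K1 K2)).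
have E' : ((p - 1) + (q - 0))%N = N by lia.
case: (hD) => _ [_ [_ [_ hw]]].
transitivity (\sum_(s1 : {ffun 'I_1 -> 'I_p}) \sum_(s2 : {ffun 'I_(p - 1)%N -> 'I_p} | shuffle s1 s2)
   \sum_(t1 : {ffun 'I_0 -> 'I_q}) \sum_(t2 : {ffun 'I_(q - 0)%N -> 'I_q} | shuffle t1 t2) v); last first.
  rewrite (eq_bigr (fun=> v)) ?sum_ffun1_const // => s1 _.
  rewrite (eq_bigr (fun=> v)) ?sum_shuffle_const //; last first.
    move=> s2 _; rewrite (eq_bigr (fun=> v)) ?sum_ffun0_const // => t1 _.
    by apply: sum_shuffle_const; apply: shuffle_ex0; rewrite subn0.
  apply: shuffle_ex1; lia.
under eq_bigr do rewrite ffunE.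
rewrite exchange_big; apply: eq_bigr => s1 _.
rewrite exchange_big; apply: eq_bigr => s2 Hs.
rewrite exchange_big; apply: eq_bigr => t1 _.
rewrite exchange_big; apply: eq_bigr => t2 Ht.
rewrite /=.
under eq_bigr => i _.
  case: (hw (tdelta k [ffun _ : 'I_1 => i])) => _ -> _.
  rewrite (proj1 (IH _ (sym_yy i Hx)) _ _ E') /yy !ffunE /=.
  over.
rewrite /= sum_delta1 ffunE /v; apply: sym_perm => //.
rewrite (permPl (codom_catf _ _)) (permPr (codom_castf _ _)) (permPr (codom_catf _ _)).
rewrite (permPr (perm_cat (shuffle_codom K1 Hs) (shuffle_codom K2 Ht))).
rewrite (permPl (perm_cat (perm_refl _) (codom_castf _ _))) (permPl (perm_cat (perm_refl _) (codom_catf _ _))).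
rewrite codom0 !codom1 !ffunE /=.
exact: perm_refl.
Qed.

Lemma sym_tdelta1 (k : fieldType) r d (I : {ffun 'I_1 -> 'I_(r d)}) : sym (tdelta k I).
Proof.
move=> s J; congr (tdelta k I _); apply/ffunP => j; rewrite ffunE.
by rewrite (ord1 j); case: (s ord0) => [[|m] Hm] //; congr (J _); apply/val_inj.
Qed.

Lemma CharS (k : fieldType) (r : nat -> nat) (e : nat)
  (Delta : forall N p q : nat, tens k r e N -> tens2 k r e p q) N :
  [pchar k] =i pred0 -> is_Delta Delta -> Char Delta N -> Char Delta (1 + N)%N.
Proof.
move=> hc hD IH x Hx.
set z := fun i => dot (tdelta k [ffun _ : 'I_1 => i]) (yy x i).
have sz : forall i, sym (z i) by move=> i; apply: sym_dot1; apply: sym_yy.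
set c : k := (1 + N)%:R.
have cn0 : c != 0 by rewrite /c ((pcharf0P k).1 hc).
have Zx : [ffun I => \sum_(i <- index_enum 'I_(r e)) z i I] = [ffun I => c * x I + (0 : tens k r e (1 + N)%N) I].
  apply/ffunP => I; rewrite !ffunE addr0.
  under eq_bigr => i _ do rewrite /z dot1E.
  rewrite exchange_big /=.
  transitivity (\sum_(u : 'I_(1 + N)%N) x I); last by rewrite sumr_const card_ord mulr_natl.
  apply: eq_bigr => u _.
  under eq_bigr => i _ do rewrite !ffunE.
  rewrite sum_delta1 ffunE; apply: sym_perm => //.
  rewrite (permPl (codom_catf _ _)) codom1 ffunE.
  by rewrite perm_sym; apply: (codom_lift I u).
case: (hD) => lin [mult _].
have key : forall p q KK, c * Delta (1 + N)%N p q x KK =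
   (if (0 < q)%N then \sum_(i : 'I_(r e)) dot2 p q (Delta 1%N 0%N 1%N (tdelta k [ffun _ : 'I_1 => i]))
        (Delta N (p - 0)%N (q - 1)%N (yy x i)) KK else 0) +
   (if (0 < p)%N then \sum_(i : 'I_(r e)) dot2 p q (Delta 1%N 1%N 0%N (tdelta k [ffun _ : 'I_1 => i]))
        (Delta N (p - 1)%N (q - 0)%N (yy x i)) KK else 0).
  move=> p q KK.
  have D1 := @Delta_sum k r e Delta hD (1 + N)%N p q _ (index_enum 'I_(r e)) z sz.
  rewrite Zx lin ?(@sym0 k r e (1 + N)%N) // in D1. have D0 := Delta0 hD (1 + N)%N p q.
  have := congr1 (fun f : tens2 k r e p q => f KK) D1; rewrite !ffunE D0 ffunE addr0 => ->.
  under eq_bigr => i _ do rewrite /z (mult 1%N N _ _ p q (@sym_tdelta1 k r e _) (sym_yy i Hx)) sum_ffunE.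
  under eq_bigr => i _ do under eq_bigr => p1 _ do rewrite sum_ffunE.
  rewrite exchange_big; under eq_bigr => p1 _ do rewrite exchange_big.
  rewrite (@sum2 k (fun p1 q1 => \sum_(i : 'I_(r e)) dot2 p q (Delta 1%N p1 q1 (tdelta k [ffun _ : 'I_1 => i]))
        (Delta N (p - p1)%N (q - q1)%N (yy x i)) KK) p q) //=.
  move=> p1 q1 h1 h2; apply: big1 => i _; apply: dot2_0l => KK'.
  case: (hD) => _ [_ [_ [_ /(_ (tdelta k [ffun _ : 'I_1 => i])) [_ _ ->]]]] //.
  by rewrite ffunE.
  exact: sym0.
split.
- move=> p q E K1 K2; set v := x (castf E (catf K1 K2)).
  have T1 : (if (0 < q)%N then \sum_(i : 'I_(r e)) dot2 p q (Delta 1%N 0%N 1%N (tdelta k [ffun _ : 'I_1 => i]))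
        (Delta N (p - 0)%N (q - 1)%N (yy x i)) (K1, K2) else 0) = v *+ q.
    case: (ltnP 0 q) => h; first exact: term01.
    by have -> : q = 0%N by lia.
  have T2 : (if (0 < p)%N then \sum_(i : 'I_(r e)) dot2 p q (Delta 1%N 1%N 0%N (tdelta k [ffun _ : 'I_1 => i]))
        (Delta N (p - 1)%N (q - 0)%N (yy x i)) (K1, K2) else 0) = v *+ p.
    case: (ltnP 0 p) => h; first exact: term10.
    by have -> : p = 0%N by lia.
  have := key p q (K1, K2); have e2 : (q + p)%N = (1 + N)%N by lia.
  rewrite T1 T2 -mulrnDr e2 -mulr_natl -/c.
  exact: mulfI.
- move=> p q Hpq KK; have := key p q KK.
  have T1 : (if (0 < q)%N then \sum_(i : 'I_(r e)) dot2 p q (Delta 1%N 0%N 1%N (tdelta k [ffun _ : 'I_1 => i]))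
        (Delta N (p - 0)%N (q - 1)%N (yy x i)) KK else 0) = 0.
    case: (ltnP 0 q) => h //; apply: big1 => i _; apply: dot2_0r => KK'.
    apply: (proj2 (IH _ (sym_yy i Hx))); lia.
  have T2 : (if (0 < p)%N then \sum_(i : 'I_(r e)) dot2 p q (Delta 1%N 1%N 0%N (tdelta k [ffun _ : 'I_1 => i]))
        (Delta N (p - 1)%N (q - 0)%N (yy x i)) KK else 0) = 0.
    case: (ltnP 0 p) => h //; apply: big1 => i _; apply: dot2_0r => KK'.
    apply: (proj2 (IH _ (sym_yy i Hx))); lia.
  rewrite T1 T2 addr0 => /eqP; rewrite mulf_eq0 (negbTE cn0) /= => /eqP //.
Qed.

Lemma CharAll (k : fieldType) (r : nat -> nat) (e : nat)
  (Delta : forall N p q : nat, tens k r e N -> tens2 k r e p q) :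
  [pchar k] =i pred0 -> is_Delta Delta -> forall N, Char Delta N.
Proof.
move=> hc hD; elim=> [|N IH]; first exact: Char0.
exact: (CharS hc hD IH).
Qed.

Lemma star_delta (k : fieldType) (r : nat -> nat)
  (c : forall d d', 'I_(r d) -> 'I_(r d') -> 'I_(r (d + d')%N) -> k) d d' n
  (K : {ffun 'I_n -> 'I_(r d)}) (b : tens k r d' n) L :
  star c (tdelta k K) b L = \sum_(J : {ffun 'I_n -> 'I_(r d')}) b J * \prod_(j < n) c d d' (K j) (J j) (L j).
Proof.
rewrite ffunE (bigD1 K) //= [X in _ + X]big1 ?addr0.
  by apply: eq_bigr => J _; rewrite ffunE eqxx mul1r.
move=> I neI; apply: big1 => J _; rewrite ffunE.
by rewrite (negbTE neI) mul0r mul0r.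
Qed.

Lemma shuffle_h_inj n m (s : {ffun 'I_n -> 'I_(n + m)}) (t : {ffun 'I_m -> 'I_(n + m)}) :
  shuffle s t -> injective (catf s t).
Proof.
move=> H; apply/injectiveP.
rewrite /injectiveb /dinjectiveb.
have -> : [seq catf s t i | i <- enum 'I_(n + m)] = codom (catf s t) by rewrite codomE.
rewrite (perm_uniq (codom_catf s t)) -(perm_uniq (shuffle_perm H)).
exact: enum_uniq.
Qed.

Lemma sum_perm_ffun (k : fieldType) (T : finType) N (s : 'S_N) (F : {ffun 'I_N -> T} -> k) :
  \sum_(I : {ffun 'I_N -> T}) F I = \sum_(I : {ffun 'I_N -> T}) F [ffun x => I (s x)].
Proof.
apply: (reindex_inj (h := fun I : {ffun 'I_N -> T} => [ffun x => I (s x)])).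
move=> I1 I2 /ffunP H; apply/ffunP => x.
by have := H ((s^-1)%g x); rewrite !ffunE permKV.
Qed.

Lemma sum_pair_split (k : fieldType) (T : finType) p q (F : {ffun 'I_p -> T} * {ffun 'I_q -> T} -> k) :
  \sum_KK F KK = \sum_(I : {ffun 'I_(p + q) -> T}) F ([ffun j => I (lshift q j)], [ffun j => I (rshift p j)]).
Proof.
rewrite (reindex (fun I : {ffun 'I_(p + q) -> T} => ([ffun j => I (lshift q j)], [ffun j => I (rshift p j)]))) //.
exists (fun KK => catf KK.1 KK.2) => [I _|[K1 K2] _].
  apply/ffunP => x; rewrite ffunE; case: (split_ordP x) => y -> /=; by rewrite ffunE.
by rewrite /=; f_equal; apply/ffunP => j; rewrite [LHS]ffunE ?catf_l ?catf_r.
Qed.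

Lemma distr2 (k : fieldType) (S T : finType) (P : S -> T -> bool) (g : S -> T -> k) (x y : k) :
  x * (\sum_s \sum_(t | P s t) g s t) * y = \sum_s \sum_(t | P s t) x * g s t * y.
Proof.
rewrite big_distrr big_distrl; apply: eq_bigr => s0 _ /=.
by rewrite big_distrr big_distrl; apply: eq_bigr => t _.
Qed.

Lemma distr2r (k : fieldType) (S T : finType) (P : S -> T -> bool) (g : S -> T -> k) (x : k) :
  x * (\sum_s \sum_(t | P s t) g s t) = \sum_s \sum_(t | P s t) x * g s t.
Proof.
rewrite big_distrr; apply: eq_bigr => s0 _ /=.
by rewrite big_distrr.
Qed.

Lemma exch4 (k : fieldType) (A B S T : finType) (P : S -> T -> bool) (F : A -> B -> S -> T -> k) :
  \sum_x \sum_y \sum_s \sum_(t | P s t) F x y s t = \sum_s \sum_(t | P s t) \sum_x \sum_y F x y s t.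
Proof.
transitivity (\sum_x \sum_s \sum_(t | P s t) \sum_y F x y s t).
  apply: eq_bigr => x _; rewrite exchange_big; apply: eq_bigr => s0 _; by rewrite exchange_big.
rewrite exchange_big; apply: eq_bigr => s0 _; by rewrite exchange_big.
Qed.

Lemma exch3 (k : fieldType) (A S T : finType) (P : S -> T -> bool) (F : A -> S -> T -> k) :
  \sum_x \sum_s \sum_(t | P s t) F x s t = \sum_s \sum_(t | P s t) \sum_x F x s t.
Proof.
rewrite exchange_big; apply: eq_bigr => s0 _; by rewrite exchange_big.
Qed.

Lemma catf_split (T : Type) p q (I : {ffun 'I_(p + q) -> T}) :
  catf [ffun j => I (lshift q j)] [ffun j => I (rshift p j)] = I.
Proof.
apply/ffunP => x; rewrite ffunE; case: (split_ordP x) => y -> /=; by rewrite ffunE.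
Qed.

Theorem lemma3p5 (k : fieldType) (B : comAlgType k) (r : nat -> nat)
  (bas : forall d : nat, 'I_(r d) -> B)
  (c : forall d d', 'I_(r d) -> 'I_(r d') -> 'I_(r (d + d')%N) -> k) :
  [pchar k] =i pred0 ->
  graded_algebra_gen_B1 bas c ->
  forall (d e n m : nat) (Delta : forall N p q : nat, tens k r e N -> tens2 k r e p q),
  is_Delta Delta ->
  forall (f : tens k r d n) (b : tens k r d m) (a : tens k r e (m + n)),
  sym f -> sym b -> sym a ->
  star c a (dot b f) = mu c b f (Delta (m + n)%N m n a).
Proof.
move=> hc _ d e n m Delta hD f b a Hf Hb Ha.
have hX : forall K1 K2, Delta (m + n)%N m n a (K1, K2) = a (catf K1 K2).
  move=> K1 K2; rewrite (proj1 (CharAll hc hD Ha) m n erefl).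
  by congr (a _); apply/ffunP => j; rewrite ffunE cast_ord_id.
apply/ffunP => L.
rewrite [LHS]ffunE [RHS]ffunE.
under eq_bigr => I _ do under eq_bigr => J _ do rewrite ffunE distr2.
under [RHS]eq_bigr => IJ _ do rewrite ffunE distr2r.
rewrite exch4 exch3; apply: eq_bigr => s _; apply: eq_bigr => t Hst.
pose G (I : {ffun 'I_(m + n) -> 'I_(r e)}) (J : {ffun 'I_(m + n) -> 'I_(r d)}) :=
  a I * ((b [ffun j => J (lshift n j)] * \prod_(j < m) c e d (I (lshift n j)) (J (lshift n j)) (L (s j))) *
         (f [ffun j => J (rshift m j)] * \prod_(j < n) c e d (I (rshift m j)) (J (rshift m j)) (L (t j)))).
transitivity (\sum_I \sum_J G I J); last first.
  rewrite [RHS]sum_pair_split; apply: eq_bigr => I _.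
  rewrite hX catf_split !star_delta big_distrl /= big_distrr /=.
  under [RHS]eq_bigr => i _ do rewrite big_distrr big_distrr /=.
  rewrite [RHS]pair_big [RHS]sum_pair_split; apply: eq_bigr => J _.
  rewrite /G /=.
  by congr (_ * (_ * _ * (_ * _))); apply: eq_bigr => j _; rewrite !ffunE.
pose sg : {perm 'I_(m + n)} := perm (shuffle_h_inj Hst).
have sgl : forall j, sg (lshift n j) = s j by move=> j; rewrite permE catf_l.
have sgr : forall j, sg (rshift m j) = t j by move=> j; rewrite permE catf_r.
rewrite (sum_perm_ffun (sg^-1)%g); apply: eq_bigr => I _.
rewrite (sum_perm_ffun (sg^-1)%g); apply: eq_bigr => J _.
rewrite /G Ha.
rewrite (reindex_inj (@perm_inj _ sg)) big_split_ord /=.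
have eb : [ffun j => [ffun x => J ((sg^-1)%g x)] (s j)] = [ffun j => J (lshift n j)].
  by apply/ffunP => j; rewrite !ffunE -sgl permK.
have ef : [ffun j => [ffun x => J ((sg^-1)%g x)] (t j)] = [ffun j => J (rshift m j)].
  by apply/ffunP => j; rewrite !ffunE -sgr permK.
rewrite eb ef.
under eq_bigr => i _ do rewrite !ffunE permK sgl.
under [X in _ * (_ * X) = _]eq_bigr => i _ do rewrite !ffunE permK sgr.
rewrite -mulrA; congr (_ * _); by rewrite mulrACA.
Qed.
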